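(* With the notation below, after separating the $\nu$ null directions of $\mathcal L$, $$\sum_{a\in G_K^m}\exp\bigl(2\pi i\,Q_{\mathcal L,K}(a)\bigr)=|G_K|^{\nu}\sum_{[y]\in G_K^{\rho}}\exp\!\bigl(\pi i\,y^\top(\mathcal L_{\mathrm{reg}}\otimes K^{-1})y\bigr).$$
   Context: $K\in M_n(\mathbb Z)$ is symmetric, nondegenerate and even; $G_K=\mathbb Z^n/K\mathbb Z^n$. $\mathcal L\in M_m(\mathbb Z)$ is a symmetric integer matrix (the linking matrix of a framed link) with rank $\rho$ and nullity $\nu=m-\rho$; $U\in GL_m(\mathbb Z)$ with $U^\top\mathcal LU=\mathrm{diag}(\mathcal L_{\mathrm{reg}},0)$, $\mathcal L_{\mathrm{reg}}\in M_\rho(\mathbb Z)$ nondegenerate. For $a\in G_K^m$ with integer lifts $x=(x_1,\dots,x_m)$, $Q_{\mathcal L,K}(a)\equiv\frac12x^\top(\mathcal L\otimes K^{-1})x\pmod1$; the summand on the right is evaluated at integer lifts of $y$. *)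

(* Defs.v *)
From HB Require Import structures.
From mathcomp Require Import all_boot all_order all_algebra.
From mathcomp Require Import reals trigo.
From mathcomp Require Import complex.
Set Implicit Arguments. Unset Strict Implicit. Unset Printing Implicit Defensive.
Import Order.TTheory GRing.Theory Num.Theory.
Local Open Scope ring_scope.

Definition expi (R : realType) (t : R) : R[i] := (cos t +i* sin t)%C.

Definition inKlat (n : nat) (K : 'M[int]_n) (v : 'cV[int]_n) : Prop :=
  exists w : 'cV[int]_n, v = K *m w.

(* R is a complete system of representatives of G_K = Z^n / K Z^n:
   every integer vector is congruent mod K Z^n to exactly one entry of R. *)
Definition Ktransversal (n : nat) (K : 'M[int]_n) (R : seq 'cV[int]_n) : Prop :=
  forall v : 'cV[int]_n, exists! i : 'I_(size R), inKlat K (v - nth 0 R i).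

Definition bilKinv (n : nat) (K : 'M[int]_n) (u v : 'cV[int]_n) : rat :=
  ((map_mx intr u)^T *m invmx (map_mx intr K) *m map_mx intr v) 0 0.

(* x^T (L \otimes K^{-1}) x for x = (x_1,...,x_m), x_j in Z^n *)
Definition quadLK (m n : nat) (L : 'M[int]_m) (K : 'M[int]_n)
  (x : 'I_m -> 'cV[int]_n) : rat :=
  \sum_(j < m) \sum_(k < m) (L j k)%:~R * bilKinv K (x j) (x k).

Definition even_form (n : nat) (K : 'M[int]_n) : Prop :=
  [/\ K^T = K, \det K != 0 & forall i, (2 %| K i i)%Z].

(* Main.v *)
Require Import Defs.
From HB Require Import structures.
From mathcomp Require Import all_boot all_order all_algebra.
From mathcomp Require Import reals trigo.
From mathcomp Require Import complex.
From mathcomp Require Import ring.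
Import Order.TTheory GRing.Theory Num.Theory.
Local Open Scope ring_scope.

Lemma sum_sym_even m (a : 'I_m -> 'I_m -> int) :
  (forall i j, a i j = a j i) -> (forall i, (2 %| a i i)%Z) ->
  (2 %| \sum_i \sum_j a i j)%Z.
Proof.
move=> asym adiag.
pose c (i j : 'I_m) := if (i < j)%N then a i j else if i == j then (a i i %/ 2)%Z else 0.
have ac i j : a i j = c i j + c j i.
  rewrite /c; case: (ltngtP i j) => h.
  - rewrite ifN; first by rewrite addr0.
    apply/eqP => e; move: h; rewrite e ltnn => F; discriminate F.
  - rewrite ifN; first by rewrite add0r asym.
    apply/eqP => e; move: h; rewrite e ltnn => F; discriminate F.
  - have e : i = j by apply: val_inj.
    by rewrite e eqxx -{1}(divzK (adiag j)); ring.
have ex : \sum_i \sum_j c j i = \sum_i \sum_j c i j by rewrite exchange_big.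
have -> : \sum_i \sum_j a i j = (\sum_i \sum_j c i j) * 2.
  transitivity (\sum_i \sum_j c i j + \sum_i \sum_j c j i); last by rewrite ex; ring.
  rewrite -big_split /=.
  by apply: eq_bigr => i _; rewrite -big_split; apply: eq_bigr => j _.
apply: dvdz_mull; exact: dvdzz.
Qed.

Lemma expi_per (R : realType) (t : R) (z : int) :
  expi (t + pi *+ 2 * z%:~R) = expi t.
Proof.
case: z => k.
  by rewrite /expi -[(Posz k)%:~R]/(k%:R) mulr_natr (periodicn (@cosD2pi R)) (periodicn (@sinD2pi R)).
rewrite NegzE mulrNz -[(Posz k.+1)%:~R]/(k.+1%:R) mulrN mulr_natr.
set s := t - _.
have -> : t = s + pi *+ 2 *+ k.+1 by rewrite /s subrK.
by rewrite /expi (periodicn (@cosD2pi R)) (periodicn (@sinD2pi R)).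
Qed.

Lemma bil_shift n (K : 'M[int]_n) (x y w z : 'cV[int]_n) :
  K^T = K -> \det K != 0 ->
  bilKinv K (x + K *m w) (y + K *m z) = bilKinv K x y +
   ((w^T *m y) 0 0 + (x^T *m z) 0 0 + (w^T *m K *m z) 0 0)%:~R.
Proof.
move=> KT K0; rewrite /bilKinv.
set Kq := map_mx intr K; set Ki := invmx Kq.
have KqT : Kq^T = Kq by rewrite /Kq map_trmx KT.
have Ku : Kq \in unitmx by rewrite unitmxE det_map_mx unitfE intr_eq0.
have h1 (p : nat) (A : 'M_(p, n)) : A *m Ki *m Kq = A by rewrite -mulmxA mulVmx // mulmx1.
have h2 (p : nat) (A : 'M_(p, n)) : A *m Kq *m Ki = A by rewrite -mulmxA mulmxV // mulmx1.
rewrite !map_mxD !map_mxM -/Kq [(_ + _)^T]linearD /= trmx_mul KqT !mulmxDl !mulmxDr !mulmxA !h1 !h2.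
have e (A : 'M[int]_1) : (A 0 0)%:~R = (map_mx intr A) 0 0 :> rat by rewrite mxE.
rewrite !rmorphD /= !e !map_mxM !map_trmx -/Kq.
rewrite [LHS]mxE [X in X + _ = _]mxE [X in _ + X = _]mxE.
rewrite -!addrA; congr (_ + _).
by rewrite [RHS]addrCA.
Qed.

Lemma trmx11 (A : 'M[int]_1) : A^T 0 0 = A 0 0.
Proof. by rewrite mxE. Qed.
Lemma dot_sym n (u v : 'cV[int]_n) : (u^T *m v) 0 0 = (v^T *m u) 0 0.
Proof. by rewrite -trmx11 trmx_mul trmxK. Qed.
Lemma dform_sym n (K : 'M[int]_n) (u v : 'cV[int]_n) : K^T = K ->
  (u^T *m K *m v) 0 0 = (v^T *m K *m u) 0 0.
Proof.
move=> KT.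
by rewrite -trmx11 !trmx_mul trmxK KT mulmxA.
Qed.
Lemma dform_even n (K : 'M[int]_n) (u : 'cV[int]_n) : even_form K ->
  (2 %| ((u^T *m K *m u) 0 0)%R)%Z.
Proof.
case=> KT _ Kev.
have -> : (u^T *m K *m u) 0 0 = \sum_a \sum_b (u a 0 * K a b * u b 0).
  rewrite mxE exchange_big /=; apply: eq_bigr => b _.
  rewrite mxE big_distrl /=; apply: eq_bigr => a _; by rewrite mxE.
apply: sum_sym_even => [a b|a].
  have Kab : K a b = K b a by rewrite -[in LHS]KT mxE.
  by rewrite Kab mulrC [u a 0 * _]mulrC mulrA.
by rewrite mulrC mulrA dvdz_mull.
Qed.

Lemma quad_shift m n (L : 'M[int]_m) (K : 'M[int]_n) (x w : 'I_m -> 'cV[int]_n) :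
  L^T = L -> even_form K ->
  exists z : int, quadLK L K (fun j => x j + K *m w j) = quadLK L K x + 2 * z%:~R.
Proof.
move=> LT Kf; have [KT K0 _] := Kf.
pose S := \sum_j \sum_k L j k * (((w j)^T *m x k) 0 0 + ((x j)^T *m w k) 0 0 + ((w j)^T *m K *m w k) 0 0).
have Sev : (2 %| S)%Z.
  apply: sum_sym_even => [j k|j].
    have Ljk : L j k = L k j by rewrite -[in LHS]LT mxE.
    rewrite Ljk (dform_sym _ _ (w j) (w k) KT); congr (_ * (_ + _)).
    by rewrite addrC (dot_sym _ (w j)) (dot_sym _ (x j)).
  rewrite (dot_sym _ (x j)).
  apply: dvdz_mull; apply: rpredD; last exact: dform_even.
  by apply/dvdzP; exists (((w j)^T *m x j) 0 0); ring.
exists (S %/ 2)%Z.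
have -> : 2 * ((S %/ 2)%Z)%:~R = \sum_j \sum_k (L j k)%:~R *
   ((((w j)^T *m x k) 0 0 + ((x j)^T *m w k) 0 0 + ((w j)^T *m K *m w k) 0 0)%:~R) :> rat.
  transitivity (S%:~R : rat).
    by rewrite -[in RHS](divzK Sev) rmorphM /= mulrC.
  rewrite /S rmorph_sum; apply: eq_bigr => j _; rewrite rmorph_sum; apply: eq_bigr => k _.
  by rewrite rmorphM.
rewrite /quadLK -big_split; apply: eq_bigr => j _; rewrite -big_split; apply: eq_bigr => k _ /=.
by rewrite bil_shift // mulrDr.
Qed.

Lemma quad_wd (R : realType) m n (L : 'M[int]_m) (K : 'M[int]_n) (x y : 'I_m -> 'cV[int]_n) :
  L^T = L -> even_form K -> (forall j, inKlat K (y j - x j)) ->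
  expi (pi * ratr (quadLK L K y)) = expi (pi * ratr (quadLK L K x)) :> R[i].
Proof.
move=> LT Kf H.
have [w Hw] := fin_all_exists H.
have -> : quadLK L K y = quadLK L K (fun j => x j + K *m w j).
  rewrite /quadLK; apply: eq_bigr => j _; apply: eq_bigr => k _.
  by rewrite -!Hw ![x _ + _]addrC !subrK.
have [z ->] := quad_shift _ _ L K x w LT Kf.
rewrite rmorphD rmorphM /= ratr_int mulrDr.
have -> : pi * (ratr 2 * z%:~R) = pi *+ 2 * z%:~R :> R.
  by rewrite (rmorph_nat _ 2) mulrA mulr_natr.
exact: expi_per.
Qed.

Lemma map_sumZ n (I : finType) (c : I -> int) (u : I -> 'cV[int]_n) :
  map_mx intr (\sum_p c p *: u p) = \sum_p (c p)%:~R *: map_mx intr (u p) :> 'cV[rat]_n.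
Proof.
apply/matrixP => a b; rewrite !mxE !summxE rmorph_sum; apply: eq_bigr => p _.
by rewrite !mxE rmorphM.
Qed.

Lemma bil_sumL n (K : 'M[int]_n) (I : finType) (c : I -> int) (u : I -> 'cV[int]_n) v :
  bilKinv K (\sum_p c p *: u p) v = \sum_p (c p)%:~R * bilKinv K (u p) v.
Proof.
rewrite /bilKinv map_sumZ linear_sum /= !mulmx_suml summxE; apply: eq_bigr => p _.
by rewrite linearZ /= -!scalemxAl mxE.
Qed.

Lemma bil_sumR n (K : 'M[int]_n) (I : finType) (c : I -> int) (u : I -> 'cV[int]_n) v :
  bilKinv K v (\sum_p c p *: u p) = \sum_p (c p)%:~R * bilKinv K v (u p).
Proof.
rewrite /bilKinv map_sumZ mulmx_sumr summxE; apply: eq_bigr => p _.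
by rewrite -!scalemxAr mxE.
Qed.

Lemma sum4 (m : nat) (F : 'I_m -> 'I_m -> 'I_m -> 'I_m -> rat) :
 \sum_p \sum_q \sum_a \sum_b F p q a b = \sum_b \sum_a \sum_p \sum_q F p q a b.
Proof.
transitivity (\sum_p \sum_b \sum_a \sum_q F p q a b).
  apply: eq_bigr => p _.
  transitivity (\sum_q \sum_b \sum_a F p q a b).
    by apply: eq_bigr => q _; rewrite exchange_big.
  rewrite exchange_big /=; apply: eq_bigr => b _; by rewrite exchange_big.
rewrite exchange_big /=; apply: eq_bigr => b _; by rewrite exchange_big.
Qed.

Lemma quad_change m n (L U : 'M[int]_m) (K : 'M[int]_n) (z : 'I_m -> 'cV[int]_n) :
  quadLK L K (fun j => \sum_k U j k *: z k) = quadLK (U^T *m L *m U) K z.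
Proof.
rewrite /quadLK.
under eq_bigr => j _ do under eq_bigr => k _ do
  rewrite bil_sumL big_distrr /=.
under eq_bigr => j _ do under eq_bigr => k _ do
  under eq_bigr => p _ do rewrite bil_sumR !big_distrr /=.
symmetry.
have E j k : ((U^T *m L *m U) j k)%:~R = \sum_a \sum_b (U b j)%:~R * (L b a)%:~R * (U a k)%:~R :> rat.
  rewrite mxE rmorph_sum; apply: eq_bigr => a _.
  rewrite mxE rmorphM rmorph_sum big_distrl /=; apply: eq_bigr => b _.
  by rewrite mxE !rmorphM.
rewrite [LHS](eq_bigr _ (fun j _ => eq_bigr _ (fun k _ => congr1 (fun t => t * _) (E j k)))).
under eq_bigr => p _ do under eq_bigr => q _ do rewrite big_distrl /=.
under eq_bigr => p _ do under eq_bigr => q _ do under eq_bigr => a _ do rewrite big_distrl /=.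
rewrite sum4; apply: eq_bigr => j _; apply: eq_bigr => k _.
apply: eq_bigr => p _; apply: eq_bigr => q _; ring.
Qed.

Lemma quad_block rho nu n (Lreg : 'M[int]_rho) (K : 'M[int]_n) (z : 'I_(rho + nu) -> 'cV[int]_n) :
  quadLK (block_mx Lreg 0 0 0 : 'M_(rho + nu)) K z = quadLK Lreg K (fun j => z (lshift nu j)).
Proof.
rewrite /quadLK big_split_ord /=.
rewrite [X in _ + X]big1 ?addr0; last first.
  move=> j _; rewrite big_split_ord /= big1 ?add0r; last first.
    by move=> k _; rewrite block_mxEdl mxE mul0r.
  by apply: big1 => k _; rewrite block_mxEdr mxE mul0r.
apply: eq_bigr => j _; rewrite big_split_ord /= [X in _ + X]big1 ?addr0; last first.
  by move=> k _; rewrite block_mxEur mxE mul0r.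
by apply: eq_bigr => k _; rewrite block_mxEul.
Qed.

Lemma sum_split (V : nmodType) (N rho nu : nat) (g : {ffun 'I_rho -> 'I_N} -> V) :
  \sum_(b : {ffun 'I_(rho + nu) -> 'I_N}) g [ffun j => b (lshift nu j)]
  = (\sum_y g y) *+ (N ^ nu).
Proof.
pose h (p : {ffun 'I_rho -> 'I_N} * {ffun 'I_nu -> 'I_N}) : {ffun 'I_(rho + nu) -> 'I_N} :=
  [ffun i => match split i with inl a => p.1 a | inr c => p.2 c end].
pose hi (b : {ffun 'I_(rho + nu) -> 'I_N}) :=
  ([ffun a => b (lshift nu a)], [ffun c => b (rshift rho c)]).
have hK : cancel hi h.
  move=> b; apply/ffunP => i; rewrite ffunE.
  move: (splitK i); case: (split i) => [a|c] <- /=; by rewrite ffunE.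
have Kh : cancel h hi.
  case=> y z; rewrite /hi /=; congr (_, _); apply/ffunP => a; rewrite !ffunE.
    by rewrite (unsplitK (inl _ a)).
  by rewrite (unsplitK (inr _ a)).
rewrite (reindex h); last exact: onW_bij (Bijective Kh hK).
transitivity (\sum_(p : {ffun 'I_rho -> 'I_N} * {ffun 'I_nu -> 'I_N}) g p.1).
  apply: eq_bigr => -[y z] _ /=; congr g; apply/ffunP => a; rewrite !ffunE.
  by rewrite (unsplitK (inl _ a)).
rewrite -(pair_big predT predT (fun y (z : {ffun 'I_nu -> 'I_N}) => g y)) /=.
rewrite -sumrMnl; apply: eq_bigr => y _.
by rewrite sumr_const card_ffun !card_ord.
Qed.

Lemma inKlat0 n (K : 'M[int]_n) : inKlat K 0.
Proof. by exists 0; rewrite mulmx0. Qed.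

Lemma inKlatB n (K : 'M[int]_n) u v : inKlat K u -> inKlat K v -> inKlat K (u - v).
Proof. by move=> [a ->] [b ->]; exists (a - b); rewrite mulmxBr. Qed.

Lemma inKlat_sum n (K : 'M[int]_n) (I : finType) (c : I -> int) (v : I -> 'cV[int]_n) :
  (forall i, inKlat K (v i)) -> inKlat K (\sum_i c i *: v i).
Proof.
move=> H; have [w Hw] := fin_all_exists H.
exists (\sum_i c i *: w i); rewrite mulmx_sumr; apply: eq_bigr => i _.
by rewrite Hw scalemxAr.
Qed.

Lemma unmix m n (U : 'M[int]_m) (d : 'I_m -> 'cV[int]_n) (p : 'I_m) :
  U \in unitmx ->
  \sum_j (invmx U) p j *: (\sum_k U j k *: d k) = d p.
Proof.
move=> Uu.
transitivity (\sum_k (invmx U *m U) p k *: d k); last first.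
  rewrite mulVmx // (bigD1 p) //= big1 ?addr0; first by rewrite mxE eqxx scale1r.
  by move=> k kp; rewrite mxE eq_sym (negbTE kp) scale0r.
under eq_bigr => j _ do rewrite scaler_sumr.
rewrite exchange_big /=; apply: eq_bigr => k _.
by rewrite mxE scaler_suml; apply: eq_bigr => j _; rewrite scalerA.
Qed.

Theorem lemma4p5 (R : realType) (n rho nu : nat)
  (K : 'M[int]_n) (L : 'M[int]_(rho + nu)) (U : 'M[int]_(rho + nu))
  (Lreg : 'M[int]_rho) (T : seq 'cV[int]_n) :
  even_form K ->
  L^T = L ->
  U \in unitmx ->
  U^T *m L *m U = block_mx Lreg 0 0 0 ->
  \det Lreg != 0 ->
  Ktransversal K T ->
  \sum_(a : {ffun 'I_(rho + nu) -> 'I_(size T)})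
      expi (2 * pi * ratr (2^-1 * quadLK L K (fun j => nth 0 T (a j))))
  = ((size T)%:R ^+ nu) *
    \sum_(y : {ffun 'I_rho -> 'I_(size T)})
      expi (pi * ratr (quadLK Lreg K (fun j => nth 0 T (y j)))) :> R[i].
Proof.
move=> Kf LT Uu hU _ Ktr.
set N := size T.
have h2 (q : rat) : 2 * pi * ratr (2^-1 * q) = pi * ratr q :> R.
  rewrite rmorphM /= fmorphV (rmorph_nat _ 2).
  have n2 : (2 : R) != 0 by rewrite pnatr_eq0.
  by field.
under eq_bigr => a _ do rewrite h2.
pose v (b : {ffun 'I_(rho + nu) -> 'I_N}) j := \sum_k U j k *: nth 0 T (b k).
have ex b : exists c : {ffun 'I_(rho + nu) -> 'I_N}, forall j, inKlat K (v b j - nth 0 T (c j)).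
  have H j : exists i : 'I_N, inKlat K (v b j - nth 0 T i).
    by have [i [Hi _]] := Ktr (v b j); exists i.
  have [f Hf] := fin_all_exists H.
  by exists (finfun f) => j; rewrite ffunE.
have [psi Hpsi] := fin_all_exists ex.
have psi_inj : injective psi.
  move=> b1 b2 e; apply/ffunP => p.
  pose d k := nth 0 T (b1 k) - nth 0 T (b2 k).
  have Hd : forall j, inKlat K (\sum_k U j k *: d k).
    move=> j.
    have -> : \sum_k U j k *: d k = (v b1 j - nth 0 T (psi b1 j)) - (v b2 j - nth 0 T (psi b2 j)).
      rewrite e /v opprB addrA subrK -sumrB; apply: eq_bigr => k _.
      by rewrite scalerBr.
    exact: inKlatB.
  have dp : inKlat K (d p) by rewrite -(unmix _ _ _ d p Uu); apply: inKlat_sum.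
  have [i [_ Hu]] := Ktr (nth 0 T (b1 p)).
  rewrite -(Hu (b1 p)); last by rewrite subrr; exact: inKlat0.
  exact: Hu.
rewrite (reindex_inj psi_inj) /=.
pose G (y : {ffun 'I_rho -> 'I_N}) :=
  expi (pi * ratr (quadLK Lreg K (fun j => nth 0 T (y j)))) : R[i].
transitivity (\sum_(b : {ffun 'I_(rho + nu) -> 'I_N}) G [ffun j => b (lshift nu j)]).
  apply: eq_bigr => b _.
  rewrite (quad_wd R _ _ L K (v b) (fun j => nth 0 T (psi b j)) LT Kf); last first.
    move=> j; have := @inKlatB _ K _ _ (inKlat0 _ K) (Hpsi b j).
    by rewrite sub0r opprB.
  rewrite /v (quad_change _ _ L U K (fun k => nth 0 T (b k))) hU quad_block /G.
  congr (expi (pi * ratr _)); rewrite /quadLK; apply: eq_bigr => j _; apply: eq_bigr => k _.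
  by rewrite !ffunE.
by rewrite (sum_split _ N rho nu G) -natrX mulr_natl.
Qed.
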